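(* Let $\kappa\geq\omega$ be a cardinal smaller than the first measurable cardinal, and let $\Phi\subseteq P(\kappa)$ be a filter all of whose elements are infinite sets. Then there is a partition $\kappa=\bigcup_{n\in\omega}I_n$ (into pairwise disjoint sets, some possibly empty) such that for every $F\in\Phi$ the set $\{n\in\omega: F\cap I_n\neq\emptyset\}$ is infinite.
   Context: A filter on a set $I$ is a nonempty family of subsets of $I$ closed under supersets and finite intersections. ''Smaller than the first measurable cardinal'' means: if measurable cardinals exist, $\kappa$ is below the least one; if none exist, every cardinal qualifies. Equivalently, every countably complete ultrafilter on $\kappa$ is principal. *)

(* Defs.v *)
From Stdlib Require Import List.

Definition finite_set {T : Type} (A : T -> Prop) : Prop :=
  exists l : list T, forall x, A x -> In x l.

Definition infinite_set {T : Type} (A : T -> Prop) : Prop := ~ finite_set A.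

Definition is_filter {T : Type} (Phi : (T -> Prop) -> Prop) : Prop :=
  (exists A, Phi A) /\
  (forall A B : T -> Prop, Phi A -> (forall x, A x -> B x) -> Phi B) /\
  (forall A B : T -> Prop, Phi A -> Phi B -> Phi (fun x => A x /\ B x)).

Definition is_ultrafilter {T : Type} (U : (T -> Prop) -> Prop) : Prop :=
  is_filter U /\ ~ U (fun _ => False) /\
  (forall A : T -> Prop, U A \/ U (fun x => ~ A x)).

Definition countably_complete {T : Type} (U : (T -> Prop) -> Prop) : Prop :=
  forall A : nat -> T -> Prop, (forall n, U (A n)) -> U (fun x => forall n, A n x).

Definition principal {T : Type} (U : (T -> Prop) -> Prop) : Prop :=
  exists a : T, forall A : T -> Prop, U A <-> A a.

(* The cardinal |T| is smaller than the first measurable cardinal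
   (equivalent formulation given in the paper's context). *)
Definition below_first_measurable (T : Type) : Prop :=
  forall U : (T -> Prop) -> Prop,
    is_ultrafilter U -> countably_complete U -> principal U.

(* Main.v *)
From Stdlib Require Import Classical List Lia Wf_nat.
From mathcomp Require Import all_boot.
From mathcomp Require Import boolp classical_sets filter.
Require Import Defs.

Lemma ultra_exists (T : Type) (G : (T -> Prop) -> Prop) :
  ProperFilter G -> exists U : (T -> Prop) -> Prop, UltraFilter U /\ (forall A, G A -> U A).
Proof. move=> PG; have [U [UU sGU]] := ultraFilterLemma PG; by exists U. Qed.

Lemma U_big (T : Type) (U : (T -> Prop) -> Prop) (A : nat -> T -> Prop) :
  UltraFilter U -> (forall n, U (A n)) ->
  forall N, U (fun x => forall j, (j < N)%coq_nat -> A j x).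
Proof.
move=> UU HA; elim=> [|N IH].
  apply: (filterS (P := setT)); last exact: filterT.
  move=> x _ j Hj; lia.
apply: (filterS (P := setI (fun x => forall j, (j < N)%coq_nat -> A j x) (A N))); last first.
  exact: filterI.
move=> x [H1 H2] j Hj.
destruct (PeanoNat.Nat.eq_dec j N) as [->|Hne]; first exact H2.
apply: H1; lia.
Qed.

Lemma list_bound (l : list nat) : exists N, forall n, In n l -> (n < N)%coq_nat.
Proof.
elim: l => [|a l [N HN]]; first by exists 0.
exists (PeanoNat.Nat.max N (S a)) => n [<-|Hn]; first lia.
have := HN n Hn; lia.
Qed.

Theorem fact2p2 (T : Type)
  (Hinf : infinite_set (fun _ : T => True))
  (Hmeas : below_first_measurable T)
  (Phi : (T -> Prop) -> Prop)
  (HPhi : is_filter Phi)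
  (HPhi_inf : forall F, Phi F -> infinite_set F) :
  exists I : nat -> T -> Prop,
    (forall x : T, exists n, I n x) /\
    (forall m n x, I m x -> I n x -> m = n) /\
    (forall F, Phi F -> infinite_set (fun n : nat => exists x, F x /\ I n x)).
Proof.
apply: NNPP => Hbad.
destruct HPhi as [[F0 HF0] [HS HI]].
set G : (T -> Prop) -> Prop := fun A => exists F, Phi F /\
  exists l : list T, forall x, F x -> ~ In x l -> A x.
have PG : ProperFilter G.
  split.
    move=> [F [PF [l Hl]]]; apply: (HPhi_inf F PF); exists l => x Fx.
    apply: NNPP => Hn; exact: (Hl x Fx Hn).
  split.
  - exists F0; split => //; by exists nil.
  - move=> A B [F1 [P1 [l1 H1]]] [F2 [P2 [l2 H2]]].
    exists (fun x => F1 x /\ F2 x); split; first exact: HI.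
    exists (l1 ++ l2) => x [Fx1 Fx2] Hn; split.
      apply: H1 => // Hx; apply: Hn; apply: in_or_app; by left.
    apply: H2 => // Hx; apply: Hn; apply: in_or_app; by right.
  - move=> P Q PQ [F [PF [l Hl]]]; exists F; split => //; exists l => x Fx Hn.
    exact/PQ/Hl.
have [U [UU sGU]] := @ultra_exists _ _ PG.
have PhiU : forall F, Phi F -> U F.
  move=> F PF; apply: sGU; exists F; split => //; by exists nil.
have Uult : is_ultrafilter U.
  split; [split; [|split]|split].
  - exists setT; exact: filterT.
  - move=> A B UA AB; exact: (filterS AB).
  - move=> A B UA UB; exact: filterI.
  - exact: filter_not_empty.
  - move=> A; exact: in_ultra_setVsetC.
have Ucc : countably_complete U.
  move=> A HA.
  apply: NNPP => Hn.
  have UC : U (fun x => ~ (forall n, A n x)).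
    by case: (in_ultra_setVsetC (fun x => forall n, A n x) UU).
  set I : nat -> T -> Prop := fun n x =>
    (n = 0 /\ forall k, A k x) \/
    (exists k, n = S k /\ ~ A k x /\ forall j, (j < k)%coq_nat -> A j x).
  have cover : forall x, exists n, I n x.
    move=> x; case: (Classical_Prop.classic (forall k, A k x)) => Hx.
      exists 0; by left.
    have [k Hk] := not_all_ex_not _ _ Hx.
    have : exists k, ~ A k x by exists k.
    move/(dec_inh_nat_subset_has_unique_least_element _ (fun k => Classical_Prop.classic _)).
    move=> [m [[Hm Hmin] _]].
    exists (S m); right; exists m; split => //; split => // j Hj.
    apply: NNPP => Hj'; have := Hmin j Hj'; lia.
  have uniq : forall m n x, I m x -> I n x -> m = n.
    move=> m n x [[-> Ha]|[k [-> [Hk Hk']]]] [[-> Hb]|[k2 [-> [Hk2 Hk2']]]].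
    - by [].
    - by case: (Hk2 (Ha k2)).
    - by case: (Hk (Hb k)).
    - case: (PeanoNat.Nat.lt_total k k2) => [Hlt|[->//|Hlt]].
        by case: (Hk (Hk2' k Hlt)).
      by case: (Hk2 (Hk' k2 Hlt)).
  have [F [PF Ffin]] : exists F, Phi F /\
      finite_set (fun n : nat => exists x, F x /\ I n x).
    apply: NNPP => Hne; apply: Hbad; exists I; split => //; split => //.
    move=> F PF Hfin; apply: Hne; by exists F.
  have [l Hl] := Ffin.
  have [N HN] := list_bound l.
  have UC2 : U (fun x => (F x /\ (forall j, (j < N)%coq_nat -> A j x)) /\
                         ~ (forall n, A n x)).
    apply: filterI => //; apply: filterI; [exact: PhiU|exact: U_big].
  have [x [[Fx HxA] Hx]] : exists x, (F x /\ (forall j, (j < N)%coq_nat -> A j x)) /\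
                         ~ (forall n, A n x).
    apply: NNPP => Hne; apply: (filter_not_empty U).
    apply: filterS UC2 => y Hy; apply: Hne; by exists y.
  have [n Hnx] := cover x.
  have Hin : In n l by apply: Hl; exists x.
  move: Hnx => [[_ Hall]|[k [En [Hk _]]]]; first exact: (Hx Hall).
  have := HN n Hin; rewrite En => HkN.
  apply: Hk; apply: HxA; lia.
have [b Hb] := Hmeas U Uult Ucc.
have : U (fun x => x <> b).
  apply: sGU; exists F0; split => //; exists (b :: nil) => x _ Hn Hx.
  apply: Hn; left; by rewrite Hx.
by move/Hb.
Qed.
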